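(* Let $Q$ be a Moufang loop. Then $xa^{-3}\cdot a^3y=T_a^{-1}(T_a(x)T_a(y))$ for all $a,x,y\in Q$, where $T_a=R_a^{-1}L_a$.
   Context: A loop is a magma with identity in which the left translations $L_a(y)=ay$ and right translations $R_a(y)=ya$ are bijections; it is Moufang if it satisfies $xy\cdot zx=(x\cdot yz)x$ (Moufang loops are power associative, so $a^{\pm3}$ are defined). *)

(* Defs.v *)
From mathcomp Require Import ssreflect ssrfun ssrbool.

Set Implicit Arguments.
Unset Strict Implicit.

(* A loop (Q, mul, e): e is a two-sided identity and every left translation
   L_a = mul a and right translation R_a = mul ^~ a is a bijection.  We record
   the bijections together with their (necessarily unique) inverse maps:
   ldiv a = L_a^{-1} and rdiv ^~ a = R_a^{-1}. *)
Definition is_loop (Q : Type) (mul : Q -> Q -> Q) (e : Q)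
    (ldiv rdiv : Q -> Q -> Q) : Prop :=
  [/\ (forall x, mul e x = x), (forall x, mul x e = x),
      (forall a, cancel (mul a) (ldiv a) /\ cancel (ldiv a) (mul a)) &
      (forall a, cancel (mul ^~ a) (rdiv ^~ a) /\ cancel (rdiv ^~ a) (mul ^~ a))].

Definition moufang_law (Q : Type) (mul : Q -> Q -> Q) : Prop :=
  forall x y z, mul (mul x y) (mul z x) = mul (mul x (mul y z)) x.

Section Ops.
Variables (Q : Type) (mul : Q -> Q -> Q) (e : Q) (ldiv rdiv : Q -> Q -> Q).

(* a^3 (well defined in a Moufang loop by power associativity) *)
Definition cube (a : Q) : Q := mul a (mul a a).
(* two-sided inverse in a Moufang loop: the unique y with a y = e *)
Definition linv (a : Q) : Q := ldiv a e.
Definition invcube (a : Q) : Q := linv (cube a).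
Definition T (a x : Q) : Q := rdiv (mul a x) a.
Definition Tinv (a x : Q) : Q := ldiv a (mul x a).
End Ops.

(* Main.v *)
Require Import Defs.
From mathcomp Require Import ssreflect ssrfun ssrbool.

Theorem proposition1p9 (Q : Type) (mul : Q -> Q -> Q) (e : Q)
    (ldiv rdiv : Q -> Q -> Q) :
  is_loop mul e ldiv rdiv -> moufang_law mul ->
  forall a x y : Q,
    mul (mul x (invcube mul e ldiv a)) (mul (cube mul a) y) =
    Tinv mul ldiv a (mul (T mul rdiv a x) (T mul rdiv a y)).
Proof.
move=> [h1 h2 hl hr] M.
set i := fun a => ldiv a e.
have ldK : forall a z, ldiv a (mul a z) = z by move=> a z; case: (hl a) => H _; exact: H.
have mlK : forall a z, mul a (ldiv a z) = z by move=> a z; case: (hl a) => _ H; exact: H.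
have rdK : forall a z, rdiv (mul z a) a = z by move=> a z; case: (hr a) => H _; exact: H.
have mrK : forall a z, mul (rdiv z a) a = z by move=> a z; case: (hr a) => _ H; exact: H.
have lcan : forall a u v, mul a u = mul a v -> u = v.
  by move=> a u v H; rewrite -(ldK a u) H ldK.
have rcan : forall a u v, mul u a = mul v a -> u = v.
  by move=> a u v H; rewrite -(rdK a u) H rdK.
have xix : forall x, mul x (i x) = e by move=> x; rewrite /i mlK.
have flex : forall x z, mul x (mul z x) = mul (mul x z) x.
  by move=> x z; have := M x e z; rewrite h2 h1.
have LI : forall x z, mul x (mul (i x) z) = z.
  move=> x z; have := M x (i x) z; rewrite xix h1 => H.
  by apply: (rcan x); rewrite -H.
have LI' : forall x z, mul (i x) (mul x z) = z.
  by move=> x z; apply: (lcan x); rewrite LI.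
have ixx : forall x, mul (i x) x = e.
  by move=> x; have := LI' x e; rewrite h2.
have RI : forall x z, mul (mul z x) (i x) = z.
  move=> x r; have := M (i x) (mul x r) x.
  rewrite LI' xix h2 -(flex x r) LI' => H; by rewrite -H.
have RI' : forall x z, mul (mul z (i x)) x = z.
  by move=> x z; apply: (rcan (i x)); rewrite RI.
have iix : forall x, i (i x) = x.
  by move=> x; rewrite /i -{2}(ixx x) ldK.
have anti : forall a b, i (mul a b) = mul (i b) (i a).
  move=> a b.
  have H1 : mul (i (mul a b)) a = i b.
    by have := LI' (mul a b) (i b); rewrite RI.
  by rewrite -H1 RI.
have A : forall x w s, mul (mul (mul x w) x) (mul (i x) s) = mul x (mul w s).
  move=> x w s; have := M x (mul w s) (i s).
  rewrite RI => H.
  have := RI (mul (i s) x) (mul x (mul w s)).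
  by rewrite H anti iix.
have B : forall u x w, mul (mul u (i x)) (mul (mul x w) x) = mul (mul u w) x.
  move=> u x w; have := M x (i u) (mul u w).
  rewrite LI' => H.
  have := LI' (mul x (i u)) (mul (mul u w) x).
  by rewrite H anti iix.
have Lm : forall b w t, mul (mul (mul b w) b) t = mul b (mul w (mul b t)).
  by move=> b w t; rewrite -(A b w (mul b t)) LI'.
have Rm : forall u b w, mul u (mul (mul b w) b) = mul (mul (mul u b) w) b.
  by move=> u b w; rewrite -(B (mul u b) b w) RI.
have rdE : forall z b, rdiv z b = mul z (i b).
  by move=> z b; rewrite -{2}(mrK b z) RI.
have ldE : forall b z, ldiv b z = mul (i b) z.
  by move=> b z; rewrite -{2}(mlK b z) LI'.
move=> a x y.
rewrite /Tinv /T /invcube /linv /cube !rdE !ldE h2.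
set U := mul (mul a x) (i a).
set V := mul (mul a y) (i a).
rewrite -(B U a V).
rewrite -(A (i a) (mul U (i a)) (mul (mul a V) a)) iix.
rewrite (flex (i a) U).
have E1 : mul (i a) U = mul x (i a) by rewrite /U (flex (i a) (mul a x)) LI'.
rewrite E1.
have E2 : mul (mul a V) a = mul a (mul a y) by rewrite /V -(flex a (mul (mul a y) (i a))) RI'.
rewrite E2 -(Lm a a y) -(flex a a).
rewrite anti anti Rm.
done.
Qed.
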